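(* Fix $\bm E$ and a family $(\sigma_{j,i})$ satisfying the degree constraints below, over a field $\mathbb K$, and let $h_0,\dots,h_s$ be the associated Conca–Valla polynomials and $(g_0,\dots,g_s)$ the reduced lexicographic ($y\succ x$) Gröbner basis of the ideal they generate. For $i=0,\dots,s$ put $M_i=\prod_{k=1}^{i}(x^{d_k}-\sigma_{k-1,k-1})\in\mathbb K[x]$ (with $M_0=1$). Then: (1) $\deg_x h_s=m_s$ and $\deg_x h_i<m_s$ for $i=0,\dots,s-1$; (2) for each $i$, $M_i$ divides $h_i,h_{i+1},\dots,h_s$; (3) $M_i$ is the polynomial coefficient of $y^{n_i}$ (i.e. the coefficient in $\mathbb K[x]$ of $y^{n_i}$ when viewed in $\mathbb K[x][y]$) both in $h_i$ and in $g_i$. Consequently, in Lazard's factorization $g_i=D_1\cdots D_i\,G_i$ of the reduced basis, one has $D_i=x^{d_i}-\sigma_{i-1,i-1}$ for $i=1,\dots,s$.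
   Context: All polynomial rings are ordered by the lexicographic order with $y\succ x$. Fix $s\ge1$, integers $0=m_0<m_1<\cdots<m_s$ and $n_0>n_1>\cdots>n_s=0$, and $\bm E=(y^{n_0},x^{m_1}y^{n_1},\dots,x^{m_{s-1}}y^{n_{s-1}},x^{m_s})$; set $d_i=m_i-m_{i-1}$, $e_i=n_{i-1}-n_i$ ($1\le i\le s$), $\delta=\sum_{i=1}^sd_in_{i-1}$. Conca–Valla parametrization: a family $(\sigma_{j,i})_{0\le i\le s-1,\ i\le j\le s}$ in $\mathbb K[x,y]$ satisfies the degree constraints if $\deg_x\sigma_{j,i}<d_{i+1}$ for all $i,j$, $\sigma_{i,i}\in\mathbb K[x]$, and $\deg_y\sigma_{j,i}<e_j$ for $j>i$. The associated polynomials are $h_s=\prod_{k=1}^s(x^{d_k}-\sigma_{k-1,k-1})$ and, for $i=s-1,\dots,0$, $h_i$ defined by $(x^{d_{i+1}}-\sigma_{i,i})h_i=y^{e_{i+1}}h_{i+1}+\sum_{j=i+1}^s\sigma_{j,i}h_j$ (an exact division). It is known (Conca–Valla) that $h_0,\dots,h_s$ is then a minimal Gröbner basis with initial terms $x^{m_i}y^{n_i}$ of an ideal whose initial ideal is $\langle\bm E\rangle$, and that this gives a bijection between such families and the set of ideals of $\mathbb K[x,y]$ with initial ideal $\langle\bm E\rangle$. Lazard's theorem: the reduced Gröbner basis $(g_0,\dots,g_s)$ of a zero-dimensional ideal with initial terms $\bm E$ factors as $g_i=D_1\cdots D_iG_i$ with $D_k\in\mathbb K[x]$ monic of degree $d_k$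 and $G_i$ monic of degree $n_i$ in $y$. *)

(* Defs.v *)
(* Bivariate polynomials K[x,y] are represented as
   {poly {poly K}} = K[x][y]: the outer variable 'X is y, the inner one
   ('X)%:P is x.  The coefficient of x^a y^b in p is (p`_b)`_a. *)
From HB Require Import structures.
From mathcomp Require Import all_boot all_order all_algebra.
Set Implicit Arguments. Unset Strict Implicit. Unset Printing Implicit Defensive.
Import Order.TTheory GRing.Theory Num.Theory.
Local Open Scope ring_scope.

Section Bivariate.
Variable K : fieldType.
Notation bpoly := {poly {poly K}}.

Definition coefxy (p : bpoly) (a b : nat) : K := (p`_b)`_a.

(* degree in x (the degree of the zero polynomial is taken to be 0) *)
Definition degx (p : bpoly) : nat := (\max_(i < size p) size (nth 0%R p i))%N.-1.

(* lexicographic order with y > x on monomials x^a y^b encoded as (a, b) *)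
Definition mlex (u v : nat * nat) : bool :=
  (u.2 < v.2)%N || ((u.2 == v.2) && (u.1 < v.1)%N).

Definition lmon (p : bpoly) : nat * nat := ((size (lead_coef p)).-1, (size p).-1).

Definition lcoef (p : bpoly) : K := lead_coef (lead_coef p).

Definition mdvd (u v : nat * nat) : bool := (u.1 <= v.1)%N && (u.2 <= v.2)%N.

Definition in_ideal (s : nat) (h : nat -> bpoly) (f : bpoly) : Prop :=
  exists c : nat -> bpoly, f = \sum_(i < s.+1) c i * h i.

Definition is_reduced_GB (s : nat) (h g : nat -> bpoly) : Prop :=
  [/\ forall i, (i <= s)%N -> in_ideal s h (g i),
      forall i, (i <= s)%N -> g i != 0 /\ lcoef (g i) = 1,
      forall f, in_ideal s h f -> f != 0 ->
        exists2 i, (i <= s)%N & mdvd (lmon (g i)) (lmon f)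
    & forall i j a b, (i <= s)%N -> (j <= s)%N -> i != j ->
        coefxy (g i) a b != 0 -> ~~ mdvd (lmon (g j)) (a, b)].

(* the staircase E = (y^{n_0}, x^{m_1}y^{n_1}, ..., x^{m_s}) *)
Definition staircase (s : nat) (m n : nat -> nat) : Prop :=
  [/\ m 0%N = 0%N, n s = 0%N,
      forall i, (i < s)%N -> (m i < m i.+1)%N
    & forall i, (i < s)%N -> (n i.+1 < n i)%N].

Definition dd (m : nat -> nat) (i : nat) : nat := (m i - m i.-1)%N.
Definition ee (n : nat -> nat) (i : nat) : nat := (n i.-1 - n i)%N.

Definition degree_constraints (s : nat) (m n : nat -> nat)
    (sigma : nat -> nat -> bpoly) : Prop :=
  forall i j, (i < s)%N -> (i <= j <= s)%N ->
    [/\ (degx (sigma j i) < dd m i.+1)%N \/ sigma j i = 0,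
        (i == j) ==> (size (sigma j i) <= 1)%N
      & (i < j)%N ==> (size (sigma j i) <= ee n j)%N].

Definition sig0 (sigma : nat -> nat -> bpoly) (i : nat) : {poly K} := (sigma i i)`_0.

Definition Mpoly (m : nat -> nat) (sigma : nat -> nat -> bpoly) (i : nat) : {poly K} :=
  \prod_(k < i) ('X^(dd m k.+1) - sig0 sigma k).

Definition CV_polys (s : nat) (m n : nat -> nat) (sigma : nat -> nat -> bpoly)
    (h : nat -> bpoly) : Prop :=
  h s = (Mpoly m sigma s)%:P /\
  forall i, (i < s)%N ->
    (('X^(dd m i.+1))%:P - sigma i i) * h i
      = 'X^(ee n i.+1) * h i.+1 + \sum_(i.+1 <= j < s.+1) sigma j i * h j.

Definition lazard_factorization (s : nat) (m n : nat -> nat) (g : nat -> bpoly)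
    (D : nat -> {poly K}) (G : nat -> bpoly) : Prop :=
  [/\ forall k, (1 <= k <= s)%N -> D k \is monic /\ size (D k) = (dd m k).+1,
      forall i, (i <= s)%N -> lead_coef (G i) = 1 /\ size (G i) = (n i).+1
    & forall i, (i <= s)%N -> g i = (\prod_(1 <= k < i.+1) D k)%:P * G i].

End Bivariate.

(* Main.v *)
Require Import Defs.
From HB Require Import structures.
From mathcomp Require Import all_boot all_order all_algebra.
From mathcomp Require Import zify ring.
Import GRing.Theory.
Local Open Scope ring_scope.

Set Implicit Arguments. Unset Strict Implicit.

Lemma leq_pn a b : (a <= b)%N -> (a.-1 <= b.-1)%N.
Proof. by case: a b => [|a] [|b]. Qed.

Section Aux.
Variable K : fieldType.
Notation bpoly := {poly {poly K}}.

Lemma xb_degx (p : bpoly) k : (forall t, (size (p`_t)%R <= k)%N) -> (degx p <= k.-1)%N.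
Proof.
move=> H; rewrite /degx.
have : (\max_(i < size p) size (nth 0%R p i) <= k)%N by apply/bigmax_leqP => i _; exact: H.
lia.
Qed.

Lemma degx_xb (p : bpoly) k : (0 < k)%N -> (degx p < k)%N -> forall t, (size (p`_t)%R <= k)%N.
Proof.
move=> Hk; rewrite /degx => Hd t.
case: (ltnP t (size p)) => Ht; last by rewrite nth_default // size_poly0.
have := @leq_bigmax _ (fun i : 'I_(size p) => size (nth 0%R p i)) (Ordinal Ht).
move=> /= H1; apply: leq_trans H1 _; move: Hd; by case: (\max_(i < size p) _).
Qed.

Lemma degxC (c : {poly K}) : degx c%:P = (size c).-1.
Proof.
rewrite /degx size_polyC; case: eqP => [->|_]; first by rewrite big_ord0 size_poly0.
by rewrite big_ord_recr big_ord0 /= coefC /= max0n.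
Qed.

Lemma xbM (p q : bpoly) a b : (forall t, (size (p`_t)%R <= a)%N) -> (forall t, (size (q`_t)%R <= b)%N) ->
  forall t, (size ((p * q)`_t)%R <= (a + b).-1)%N.
Proof.
move=> Hp Hq t; rewrite coefM.
apply: (big_ind (fun x : {poly K} => (size x <= (a + b).-1)%N)).
- by rewrite size_poly0.
- move=> x y Hx Hy; apply: leq_trans (size_polyD _ _) _; by rewrite geq_max Hx Hy.
- move=> j _; apply: leq_trans (size_polyMleq _ _) _.
  have := Hp j; have := Hq (t - j)%N; lia.
Qed.

Lemma sum_nat_ind (V : nmodType) (P : V -> Prop) a b (F : nat -> V) :
  P 0 -> (forall x y, P x -> P y -> P (x + y)) -> (forall j, (a <= j < b)%N -> P (F j)) ->
  P (\sum_(a <= j < b) F j).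
Proof.
move=> H0 HD HF; rewrite big_nat_cond; apply: big_ind => // j /andP[Hj _]; exact: HF.
Qed.

Lemma desc_ind (s : nat) (Q : nat -> Prop) : Q s ->
  (forall i, (i < s)%N -> (forall j, (i < j <= s)%N -> Q j) -> Q i) ->
  forall i, (i <= s)%N -> Q i.
Proof.
move=> Hs Hst.
suff H : forall k j, (s - k <= j <= s)%N -> Q j.
  by move=> i Hi; apply: (H s); lia.
elim=> [|k IH] j Hj.
  by have -> : j = s by lia.
case: (leqP (s - k) j) => Hjk; first by apply: IH; lia.
apply: Hst; first by lia.
move=> j' Hj'; apply: IH; lia.
Qed.

Lemma Mpoly_split m sigma a b : (a <= b)%N ->
  exists X, Mpoly (K:=K) m sigma b = Mpoly m sigma a * X.
Proof.
move=> Hab; exists (\prod_(a <= k < b) ('X^(dd m k.+1) - sig0 sigma k)).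
by rewrite /Mpoly -!(big_mkord (fun _ => true) (fun k => ('X^(dd m k.+1) - sig0 sigma k))) (@big_cat_nat _ _ _ a 0 b).
Qed.

Lemma coef_top (p : {poly K}) k : lead_coef p = 1 -> size p = k.+1 ->
  forall t, (k <= t)%N -> p`_t = (t == k)%:R.
Proof.
move=> Hl Hs t Ht; case: eqP => [->|Hne].
  by rewrite -Hl lead_coefE Hs.
by rewrite nth_default // Hs; lia.
Qed.

Lemma coef_neq0_size (p : bpoly) k : p`_k != 0 -> (k < size p)%N.
Proof.
move=> H; rewrite ltnNge; apply: contra H => Hs; by rewrite nth_default.
Qed.

End Aux.

Lemma stair_m s m n : staircase s m n -> forall i j, (i < j)%N -> (j <= s)%N -> (m i < m j)%N.
Proof.
move=> [_ _ Hm _] i; elim=> // j IH; rewrite ltnS leq_eqVlt => /orP[/eqP->|Hij] Hj.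
  by apply: Hm.
apply: ltn_trans (IH Hij (ltnW Hj)) (Hm j Hj).
Qed.

Lemma stair_n s m n : staircase s m n -> forall i j, (i < j)%N -> (j <= s)%N -> (n j < n i)%N.
Proof.
move=> [_ _ _ Hn] i; elim=> // j IH; rewrite ltnS leq_eqVlt => /orP[/eqP->|Hij] Hj.
  by apply: Hn.
apply: ltn_trans (Hn j Hj) (IH Hij (ltnW Hj)).
Qed.

Arguments stair_m {s m n} _ {i j}.
Arguments stair_n {s m n} _ {i j}.

Section Aux2.
Variable K : fieldType.
Variables (s : nat) (m n : nat -> nat) (sigma : nat -> nat -> {poly {poly K}}).
Hypothesis Hst : staircase s m n.
Hypothesis Hdc : degree_constraints s m n sigma.

Lemma dd_pos i : (i < s)%N -> (0 < dd m i.+1)%N.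
Proof. move=> Hi; rewrite /dd /=; have := stair_m Hst (ltnSn i) Hi; lia. Qed.

Lemma sig0_size i : (i < s)%N -> (size (sig0 sigma i) <= dd m i.+1)%N.
Proof.
move=> Hi; have Hii : (i <= i <= s)%N by rewrite leqnn ltnW.
have [H1 _ _] := Hdc Hi Hii.
rewrite /sig0; case: H1 => [H|->]; last by rewrite coef0 size_poly0.
exact: (degx_xb (dd_pos Hi) H 0).
Qed.

Lemma sigma_const i : (i < s)%N -> sigma i i = (sig0 sigma i)%:P.
Proof.
move=> Hi; have Hii : (i <= i <= s)%N by rewrite leqnn ltnW.
have [_ H2 _] := Hdc Hi Hii.
by rewrite eqxx /= in H2; rewrite /sig0 -size1_polyC.
Qed.

Lemma c_monic i : (i < s)%N ->
  ('X^(dd m i.+1) - sig0 sigma i) \is monic /\ size ('X^(dd m i.+1) - sig0 sigma i) = (dd m i.+1).+1.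
Proof.
move=> Hi.
have Hsz : (size (- sig0 sigma i) < size ('X^(dd m i.+1) : {poly K}))%N.
  by rewrite size_polyN size_polyXn ltnS sig0_size.
split; first by rewrite monicE lead_coefDl // lead_coefXn.
by rewrite size_polyDl // size_polyXn.
Qed.

Lemma M_monic i : (i <= s)%N -> Mpoly m sigma i \is monic /\ size (Mpoly m sigma i) = (m i).+1.
Proof.
elim: i => [|i IH] Hi.
  by rewrite /Mpoly big_ord0 monic1 size_poly1; case: Hst => -> *.
have [IH1 IH2] := IH (ltnW Hi).
have [C1 C2] := c_monic Hi.
rewrite /Mpoly big_ord_recr /= -/(Mpoly m sigma i).
rewrite monicMl // size_Mmonic ?monic_neq0 // IH2 C2; split => //.
have := stair_m Hst (ltnSn i) Hi; rewrite /dd /=; lia.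
Qed.

End Aux2.

Unset Implicit Arguments. Set Strict Implicit.

Theorem mainTheorem5 (K : fieldType) (s : nat) (m n : nat -> nat)
    (sigma : nat -> nat -> {poly {poly K}}) (h g : nat -> {poly {poly K}}) :
  (1 <= s)%N ->
  staircase s m n ->
  degree_constraints s m n sigma ->
  CV_polys s m n sigma h ->
  is_reduced_GB s h g ->
  (forall i, (i <= s)%N -> lmon (g i) = (m i, n i)) ->
  [/\ degx (h s) = m s /\ (forall i, (i < s)%N -> (degx (h i) < m s)%N),
      (forall i j, (i <= j <= s)%N ->
         exists q : {poly {poly K}}, h j = q * (Mpoly m sigma i)%:P),
      (forall i, (i <= s)%N ->
         (h i)`_(n i) = Mpoly m sigma i /\ (g i)`_(n i) = Mpoly m sigma i)
    & (forall (D : nat -> {poly K}) (G : nat -> {poly {poly K}}),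
         lazard_factorization s m n g D G ->
         forall i, (1 <= i <= s)%N -> D i = 'X^(dd m i) - sig0 sigma i.-1)].
Proof.
move=> Hs1 Hst Hdc [Hhs Hrec] [Gid Gnz Gdiv Gred] Hlm.
have Mmon := M_monic Hst Hdc.
have ms_pos : (0 < m s)%N.
  have := stair_m Hst (i:=0) (j:=s) Hs1 (leqnn s); by case: Hst => -> *.
have HQ : forall j, (j <= s)%N ->
  [/\ (size (h j) <= (n j).+1)%N, (h j)`_(n j) = Mpoly m sigma j,
      (exists q, h j = q * (Mpoly m sigma j)%:P)
    & forall t, (size ((h j)`_t)%R <= (if (j < s)%N then m s else (m s).+1))%N].
  apply: desc_ind.
  - rewrite Hhs; split.
    + exact: leq_trans (size_polyC_leq1 _) _.
    + by case: Hst => _ -> _ _; rewrite coefC.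
    + by exists 1; rewrite mul1r.
    + move=> t; rewrite ltnn coefC; case: eqP => _.
        by rewrite (Mmon s (leqnn s)).2.
      by rewrite size_poly0.
  move=> i Hi IH.
  have [cmon csz] := c_monic Hst Hdc Hi.
  set c := 'X^(dd m i.+1) - sig0 sigma i in cmon csz.
  have cnz : c != 0 := monic_neq0 cmon.
  have cPnz : c%:P != 0 by rewrite polyC_eq0.
  have Hr := Hrec i Hi.
  rewrite (sigma_const Hdc Hi) -polyCB -/c in Hr.
  have Hii1 : (i < i.+1 <= s)%N by rewrite ltnSn Hi.
  have [Q1 Q2 Q3 Q4] := IH i.+1 Hii1.
  set S := \sum_(i.+1 <= j < s.+1) sigma j i * h j in Hr.
  have Hni : (n i.+1 < n i)%N := stair_n Hst (ltnSn i) Hi.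
  have dpos := dd_pos Hst Hi.
  have SHsz : (size S <= n i)%N.
    apply: (sum_nat_ind (P := fun x : {poly {poly K}} => (size x <= n i)%N)) => [|x y Hx Hy|j Hj].
    - by rewrite size_poly0.
    - by apply: leq_trans (size_polyD _ _) _; rewrite geq_max Hx Hy.
    have Hj' : (i < j <= s)%N by lia.
    have [Qj1 _ _ _] := IH j Hj'.
    have Hij : (i <= j <= s)%N by lia.
    have [_ _ H3] := Hdc i j Hi Hij.
    have Hlt : (i < j)%N by lia.
    rewrite Hlt /= in H3.
    apply: leq_trans (size_polyMleq _ _) _.
    have Hnj : (n j < n j.-1)%N by apply: (stair_n Hst (i:=j.-1) (j:=j)); lia.
    have Hnj2 : (n j.-1 <= n i)%N.
      case: (eqVneq j.-1 i) => [->//|Hne].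
      by apply: ltnW; apply: (stair_n Hst (i:=i) (j:=j.-1)); lia.
    apply: leq_trans (_ : ((n j.-1 - n j) + (n j).+1).-1 <= n i)%N; last by lia.
    rewrite /ee in H3; exact: leq_pn (leq_add H3 Qj1).
  have SHxb : forall t, (size (S`_t)%R <= dd m i.+1 + m s)%N.
    move=> t; rewrite coef_sum.
    apply: (sum_nat_ind (P := fun x : {poly K} => (size x <= dd m i.+1 + m s)%N)) => [|x y Hx Hy|j Hj].
    - by rewrite size_poly0.
    - by apply: leq_trans (size_polyD _ _) _; rewrite geq_max Hx Hy.
    have Hj' : (i < j <= s)%N by lia.
    have [_ _ _ Qj4] := IH j Hj'.
    have Hij : (i <= j <= s)%N by lia.
    have [H1 _ _] := Hdc i j Hi Hij.
    have Hb : forall t, (size ((h j)`_t)%R <= (m s).+1)%N.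
      by move=> t'; apply: leq_trans (Qj4 t') _; case: ifP.
    have Ha : forall t, (size ((sigma j i)`_t)%R <= dd m i.+1)%N.
      case: H1 => [H1|->]; first exact: degx_xb dpos H1.
      by move=> t'; rewrite coef0 size_poly0.
    have := xbM Ha Hb t; lia.
  have SHdiv : exists q, S = q * (Mpoly m sigma i.+1)%:P.
    apply: (sum_nat_ind (P := fun x : {poly {poly K}} => exists q, x = q * (Mpoly m sigma i.+1)%:P)) => [|x y [qx ->] [qy ->]|j Hj].
    - by exists 0; rewrite mul0r.
    - by exists (qx + qy); rewrite mulrDl.
    have Hj' : (i < j <= s)%N by lia.
    have [_ _ [q Hq] _] := IH j Hj'.
    have Hij1 : (i.+1 <= j)%N by lia.
    have [X HX] := Mpoly_split m sigma Hij1.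
    exists (sigma j i * q * X%:P); rewrite Hq HX polyCM; ring.
  have HMS : Mpoly m sigma i.+1 = Mpoly m sigma i * c by rewrite /Mpoly big_ord_recr.
  have Lsz : size (c%:P * h i) = size (h i) by rewrite mul_polyC size_scale.
  split.
  - rewrite -Lsz Hr; apply: leq_trans (size_polyD _ _) _; rewrite geq_max.
    apply/andP; split; last exact: leq_trans SHsz (leqnSn _).
    apply: leq_trans (size_polyMleq _ _) _; rewrite size_polyXn.
    apply: leq_trans (leq_pn (leq_add (leqnn _) Q1)) _; rewrite /ee /=; lia.
  - have := congr1 (fun p : {poly {poly K}} => p`_(n i)) Hr.
    rewrite /= coefCM coefD coefXnM (nth_default _ SHsz) addr0.
    have -> : (n i < ee n i.+1)%N = false by rewrite /ee /=; lia.
    have -> : (n i - ee n i.+1)%N = n i.+1 by rewrite /ee /=; lia.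
    rewrite Q2 HMS mulrC => H; exact: (mulIf cnz H).
  - have [q Hq] := SHdiv; have [q1 Hq1] := Q3.
    exists ('X^(ee n i.+1) * q1 + q); apply: (mulfI cPnz).
    rewrite Hr Hq1 Hq HMS polyCM; ring.
  - move=> t; rewrite Hi.
    have Hb : (size ((c%:P * h i)`_t)%R <= dd m i.+1 + m s)%N.
      rewrite Hr coefD; apply: leq_trans (size_polyD _ _) _; rewrite geq_max SHxb andbT.
      rewrite coefXnM; case: ifP => _; first by rewrite size_poly0.
      move: (Q4 (t - ee n i.+1)%N) => H; apply: leq_trans H _; case: ifP => _; lia.
    rewrite coefCM in Hb.
    case: (eqVneq ((h i)`_t) 0) => [->|hz]; first by rewrite size_poly0.
    rewrite size_mul // csz in Hb.
    move: Hb; rewrite addSn /= leq_add2l; exact.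
have P3 : forall i, (i <= s)%N ->
    (h i)`_(n i) = Mpoly m sigma i /\ (g i)`_(n i) = Mpoly m sigma i.
  move=> i Hi; have [Q1 Q2 _ _] := HQ i Hi; split => //.
  have [gnz glc] := Gnz i Hi.
  have := Hlm i Hi; rewrite /lmon => -[Hlc Hsz].
  have Hsg : size (g i) = (n i).+1.
    by rewrite -Hsz prednK // size_poly_gt0.
  have Hlg : lead_coef (g i) = (g i)`_(n i) by rewrite lead_coefE Hsg.
  have lnz : lead_coef (g i) != 0.
    apply/eqP => H0; move: glc; rewrite /lcoef H0 lead_coef0 => /eqP.
    by rewrite eq_sym oner_eq0.
  have Hsl : size (lead_coef (g i)) = (m i).+1.
    by rewrite -Hlc prednK // size_poly_gt0.
  have [Mm Ms] := Mmon i Hi.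
  apply/eqP; rewrite -subr_eq0; apply/negPn/negP => HP.
  set f := g i - h i.
  have fc : f`_(n i) = (g i)`_(n i) - Mpoly m sigma i by rewrite coefB Q2.
  have fsz : size f = (n i).+1.
    apply/eqP; rewrite eqn_leq; apply/andP; split.
      apply: leq_trans (size_polyD _ _) _; rewrite size_polyN geq_max Q1 Hsg leqnn //.
    by apply: coef_neq0_size; rewrite fc.
  have fnz : f != 0 by rewrite -size_poly_gt0 fsz.
  have fin : in_ideal s h f.
    have [cc Hcc] := Gid i Hi.
    exists (fun k => cc k - (k == i)%:R).
    rewrite /f Hcc.
    rewrite [RHS](eq_bigr (fun k : 'I_s.+1 => cc k * h k - (k == i :> nat)%:R * h k)); last first.
      by move=> k _ /=; rewrite mulrBl.
    rewrite sumrB; congr (_ - _); symmetry.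
    have Hi' : (i < s.+1)%N by [].
    rewrite (bigD1 (Ordinal Hi')) //= eqxx mul1r big1 ?addr0 // => k Hk.
    have -> : (nat_of_ord k == i) = false.
      by apply/negbTE; apply: contra Hk => /eqP Hk; apply/eqP/val_inj.
    by rewrite mul0r.
  have [j Hj Hdv] := Gdiv f fin fnz.
  rewrite /mdvd Hlm // /lmon fsz lead_coefE fsz /= fc in Hdv.
  have Lg1 : lead_coef ((g i)`_(n i)) = 1 by rewrite -Hlg.
  have Sg : size ((g i)`_(n i)) = (m i).+1 by rewrite -Hlg.
  have Hsz' : (size ((g i)`_(n i) - Mpoly m sigma i)%R <= m i)%N.
    apply/leq_sizeP => t Ht; rewrite coefB.
    by rewrite (coef_top Lg1 Sg Ht) (coef_top (eqP Mm) Ms Ht) subrr.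
  have Hpos : (0 < size ((g i)`_(n i) - Mpoly m sigma i)%R)%N by rewrite size_poly_gt0.
  move/andP: Hdv => [Hm Hn].
  have Hmji : (m j < m i)%N by apply: leq_ltn_trans Hm _; rewrite prednK.
  have Hji : (j < i)%N.
    rewrite ltnNge; apply/negP => Hij.
    case: (eqVneq i j) => [Eij|Nij]; first by rewrite Eij in Hmji; lia.
    have := stair_m Hst (i:=i) (j:=j) _ Hj; lia.
  have := stair_n Hst Hji Hi; lia.
split.
- split.
    by rewrite Hhs degxC (Mmon s (leqnn s)).2.
  move=> i Hi; have [_ _ _ Q4] := HQ i (ltnW Hi); rewrite Hi in Q4.
  have := xb_degx Q4; lia.
- move=> i j /andP[Hij Hjs]; have [_ _ [q Hq] _] := HQ j Hjs.
  have [X HX] := Mpoly_split m sigma Hij.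
  exists (q * X%:P); rewrite Hq HX polyCM; ring.
- exact: P3.
move=> D G [HD HG Hg] i /andP[H1i His].
have HP : forall k, (k <= s)%N -> \prod_(1 <= l < k.+1) D l = Mpoly m sigma k.
  move=> k Hk; have [_ <-] := P3 k Hk.
  rewrite (Hg k Hk) coefCM.
  have [HG1 HG2] := HG k Hk.
  have -> : (G k)`_(n k) = lead_coef (G k) by rewrite lead_coefE HG2.
  by rewrite HG1 mulr1.
case: i H1i His => // i _ His.
have H1 := HP i (ltnW His); have H2 := HP i.+1 His.
rewrite big_nat_recr //= H1 /Mpoly big_ord_recr /= -/(Mpoly m sigma i) in H2.
apply: (mulfI (monic_neq0 (Mmon i (ltnW His)).1)); exact: H2.
Qed.
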